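(* For every positive integer $d$, the hypercube $Q_d$ satisfies $\chi_{\mathrm{so}}(Q_d)=2$ if $d$ is odd and $\chi_{\mathrm{so}}(Q_d)=4$ if $d$ is even.
   Context: $Q_d$ has vertex set $\{0,1\}^d$, two vertices adjacent iff they differ in exactly one coordinate. A strong odd coloring of a graph is a proper vertex coloring such that for each vertex $v$ every color appearing on the open neighborhood $N(v)$ occurs an odd number of times on $N(v)$; $\chi_{\mathrm{so}}$ is the minimum number of colors. *)

(* Defs.v *)
From mathcomp Require Import all_boot.
Set Implicit Arguments. Unset Strict Implicit. Unset Printing Implicit Defensive.

Definition cube_vertex (d : nat) := {ffun 'I_d -> bool}.

Definition cube_adj (d : nat) : rel (cube_vertex d) :=
  fun u v => #|[set i : 'I_d | u i != v i]| == 1.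

Definition nbhd (T : finType) (e : rel T) (v : T) : {set T} := [set u | e v u].

Definition proper_coloring (T : finType) (e : rel T) (k : nat) (c : T -> 'I_k) : Prop :=
  forall u v, e u v -> c u <> c v.

Definition strong_odd_coloring (T : finType) (e : rel T) (k : nat) (c : T -> 'I_k) : Prop :=
  proper_coloring e c /\
  forall v (a : 'I_k), (exists2 u, u \in nbhd e v & c u = a) ->
    odd #|[set u in nbhd e v | c u == a]|.

Definition strong_odd_colorable (T : finType) (e : rel T) (k : nat) : Prop :=
  exists c : T -> 'I_k, strong_odd_coloring e c.

Definition chi_so_eq (T : finType) (e : rel T) (k : nat) : Prop :=
  strong_odd_colorable e k /\ forall k', k' < k -> ~ strong_odd_colorable e k'.

(* Main.v *)
Require Import Defs.
From mathcomp Require Import all_boot zify.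
From Stdlib Require Import Lia.
Set Implicit Arguments. Unset Strict Implicit. Unset Printing Implicit Defensive.

Definition flip d (v : cube_vertex d) (n : nat) : cube_vertex d :=
  [ffun j : 'I_d => if val j == n then ~~ v j else v j].

Lemma flipK d (v : cube_vertex d) n : flip (flip v n) n = v.
Proof. apply/ffunP=> j; rewrite !ffunE; by case: (val j == n) => //; rewrite negbK. Qed.

Lemma flipC d (v : cube_vertex d) i j : flip (flip v i) j = flip (flip v j) i.
Proof. apply/ffunP=> k; rewrite !ffunE; by case: (val k == i); case: (val k == j). Qed.

Lemma adj_flip d (v : cube_vertex d) n : n < d -> cube_adj v (flip v n).
Proof.
move=> hn; rewrite /cube_adj.
have -> : [set i : 'I_d | v i != flip v n i] = [set Ordinal hn].
  apply/setP=> j; rewrite !inE ffunE -val_eqE /=.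
  by case: (val j == n); rewrite ?eqxx //; case: (v j).
by rewrite cards1.
Qed.

Lemma adjP d (u v : cube_vertex d) : cube_adj u v -> exists2 n, n < d & v = flip u n.
Proof.
rewrite /cube_adj => /cards1P [i hi]; exists (val i); first exact: ltn_ord.
apply/ffunP=> j; rewrite ffunE.
have := congr1 (fun A : {set 'I_d} => j \in A) hi; rewrite !inE /= -val_eqE /=.
case: (val j == val i) => /=; first by case: (u j); case: (v j).
by move/negbFE/eqP.
Qed.

Lemma flip_inj d (v : cube_vertex d) (i j : 'I_d) : flip v i = flip v j -> i = j.
Proof.
move=> /ffunP /(_ i); rewrite !ffunE eqxx.
case: eqP => [/val_inj //|]; by case: (v i).
Qed.

Lemma nbhd_card d (v : cube_vertex d) (p : pred (cube_vertex d)) :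
  #|[set u in nbhd (@cube_adj d) v | p u]| = \sum_(0 <= i < d) p (flip v i).
Proof.
have -> : [set u in nbhd (@cube_adj d) v | p u] =
   (fun i : 'I_d => flip v i) @: [set i : 'I_d | p (flip v i)].
  apply/setP=> u; rewrite !inE; apply/andP/imsetP.
    case=> /adjP [n hn ->] hp; exists (Ordinal hn) => //; by rewrite inE.
  case=> i; rewrite inE => hp ->; split=> //; exact: adj_flip.
rewrite card_imset; last by move=> i j; apply: flip_inj.
rewrite big_mkord -sum1_card big_mkcond /=; apply: eq_bigr => i _.
by rewrite inE; case: (p _).
Qed.


Definition wt d (v : cube_vertex d) := \sum_(j : 'I_d) (v j : nat).

Lemma odd_wt_flip d (v : cube_vertex d) n : n < d -> odd (wt (flip v n)) = ~~ odd (wt v).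
Proof.
move=> hn; rewrite /wt (bigD1 (Ordinal hn)) //= [in RHS](bigD1 (Ordinal hn)) //=.
rewrite ffunE eqxx !oddD.
have -> : \sum_(i < d | i != Ordinal hn) flip v n i = \sum_(i < d | i != Ordinal hn) v i.
  apply: eq_bigr => i hi; rewrite ffunE.
  by move: hi; rewrite -val_eqE /= => /negbTE ->.
by case: (v (Ordinal hn)); rewrite /= ?negbK.
Qed.

Lemma small_k d k : 0 < d -> k <= 1 -> ~ strong_odd_colorable (@cube_adj d) k.
Proof.
move=> hd hk [c [hp _]].
pose v : cube_vertex d := [ffun => false].
apply: (hp v (flip v 0) (adj_flip v hd)).
apply: val_inj; move: (ltn_ord (c v)) (ltn_ord (c (flip v 0))).
move=> h1 h2.
have e1 : val (c v) = 0 by apply/eqP; rewrite -leqn0 -ltnS (leq_trans h1 hk).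
have e2 : val (c (flip v 0)) = 0 by apply/eqP; rewrite -leqn0 -ltnS (leq_trans h2 hk).
by rewrite e1 e2.
Qed.

Definition col2 (b : bool) : 'I_2 := if b then @Ordinal 2 1 isT else @Ordinal 2 0 isT.

Lemma col2_inj : injective col2.
Proof. by case; case => // /(congr1 val). Qed.

Lemma odd_colorable d : odd d -> strong_odd_colorable (@cube_adj d) 2.
Proof.
move=> hd; exists (fun v => col2 (odd (wt v))); split.
  move=> u v /adjP [n hn ->] /col2_inj; rewrite odd_wt_flip //; by case: (odd _).
move=> v a [u]; rewrite inE => /adjP [n hn ->] <-.
rewrite (nbhd_card v (fun u => col2 (odd (wt u)) == col2 (odd (wt (flip v n))))).
rewrite (eq_big_nat _ _ (F2 := fun _ => 1)); last first.
  by move=> i /andP [_ hi]; rewrite !odd_wt_flip // eqxx.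
by rewrite sum_nat_const_nat muln1 subn0.
Qed.


Lemma col4_lt (b1 b2 : bool) : 2 * b1 + b2 < 4.
Proof. by case: b1; case: b2. Qed.
Definition col4 (b1 b2 : bool) : 'I_4 := Ordinal (col4_lt b1 b2).

Lemma col4_inj b1 b2 b1' b2' : col4 b1 b2 = col4 b1' b2' -> b1 = b1' /\ b2 = b2'.
Proof. by case: b1; case: b2; case: b1'; case: b2' => // /(congr1 val). Qed.

Lemma even_colorable d : ~~ odd d -> 0 < d -> strong_odd_colorable (@cube_adj d) 4.
Proof.
case: d => // d hd _.
pose c := fun v : cube_vertex d.+1 => col4 (odd (wt v)) (v ord0).
have cf : forall v n, n < d.+1 ->
   c (flip v n) = col4 (~~ odd (wt v)) (if n == 0 then ~~ v ord0 else v ord0).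
  by move=> v n hn; rewrite /c odd_wt_flip // /flip ffunE /= eq_sym.
exists c; split.
  move=> u v /adjP [n hn ->]; rewrite cf // /c => /col4_inj [].
  by case: (odd _).
move=> v a [u]; rewrite inE => /adjP [n hn ->] hua.
rewrite (nbhd_card v (fun u => c u == a)).
rewrite (eq_big_nat _ _ (F2 := fun i => col4 (~~ odd (wt v)) (if i == 0 then ~~ v ord0 else v ord0) == a : nat)); last first.
  by move=> i /andP [_ hi]; rewrite cf.
rewrite big_nat_recl //= (eq_big_nat _ _ (F2 := fun _ => col4 (~~ odd (wt v)) (v ord0) == a : nat)); last first.
  by move=> i _.
rewrite sum_nat_const_nat subn0.
have hne : col4 (~~ odd (wt v)) (~~ v ord0) != col4 (~~ odd (wt v)) (v ord0).
  by apply/eqP => /col4_inj [_]; case: (v ord0).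
move: hua; rewrite cf //.
have hdo : odd d by move: hd; rewrite /= negbK.
move: hne; set x := col4 _ (~~ v ord0); set y := col4 _ (v ord0) => hne.
case: (n == 0) => <-.
  by rewrite eqxx eq_sym (negbTE hne) muln0.
by rewrite eqxx (negbTE hne) muln1.
Qed.


Lemma sym_even n (g : nat -> nat -> nat) :
  (forall i j, g i j = g j i) -> (forall i, g i i = 0) ->
  ~~ odd (\sum_(0 <= i < n) \sum_(0 <= j < n) g i j).
Proof.
move=> gs g0; elim: n => [|n IH]; first by rewrite big_geq.
rewrite big_nat_recr //=.
rewrite (eq_bigr (fun i => \sum_(0 <= j < n) g i j + g i n)); last first.
  by move=> i _; rewrite big_nat_recr.
rewrite big_split /= big_nat_recr //= g0 addn0.
have -> : \sum_(0 <= j < n) g n j = \sum_(0 <= i < n) g i n.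
  by apply: eq_bigr => i _; rewrite gs.
rewrite !oddD; move: IH; case: (odd (\sum_(0 <= i < n) \sum_(0 <= j < n) g i j)) => //= _.
by case: (odd _).
Qed.

Lemma odd_sum_eq (I : Type) (r : seq I) (P : pred I) (F G : I -> nat) :
  (forall i, P i -> odd (F i) = odd (G i)) ->
  odd (\sum_(i <- r | P i) F i) = odd (\sum_(i <- r | P i) G i).
Proof.
move=> h; apply: (big_ind2 (fun a b => odd a = odd b)) => //.
by move=> x1 x2 y1 y2 e1 e2; rewrite !oddD e1 e2.
Qed.

Section Lower.
Variables (d k : nat) (c : cube_vertex d -> 'I_k).
Hypothesis hc : strong_odd_coloring (@cube_adj d) c.

Definition F v a := \sum_(0 <= i < d) (c (flip v i) == a : nat).

Lemma F_self v : F v (c v) = 0.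
Proof.
rewrite /F big_nat_cond big1 // => i /andP [/andP [_ hi] _].
have := hc.1 _ _ (adj_flip v hi).
by case: eqP => // ->.
Qed.

Lemma F_odd v a : 0 < F v a -> odd (F v a).
Proof.
move=> hp; rewrite /F -(nbhd_card v (fun u => c u == a)).
apply: hc.2.
case: (boolP [exists i : 'I_d, c (flip v i) == a]) => [/existsP [i /eqP ha]|h].
  by exists (flip v i) => //; rewrite inE; apply: adj_flip.
move: hp; rewrite /F big_nat_cond big1 // => i /andP [/andP [_ hi] _].
case: eqP => // ha; case/negP: h; apply/existsP; exists (Ordinal hi); by rewrite ha.
Qed.

Lemma sumF v : \sum_(x : 'I_k) F v x = d.
Proof.
rewrite /F exchange_big /=.
rewrite (eq_bigr (fun _ => 1)); first by rewrite sum_nat_const_nat muln1 subn0.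
move=> i _; rewrite (bigD1 (c (flip v i))) //= eqxx big1 // => x hx.
by rewrite eq_sym (negbTE hx).
Qed.

Lemma step1 v a : 0 < d -> ~~ odd d -> k <= 3 -> a != c v -> odd (F v a).
Proof.
move=> hd he hk hav.
have hF : forall x, (F v x == 0) || odd (F v x).
  by move=> x; case: (posnP (F v x)) => [->//|/F_odd ->]; rewrite orbT.
pose P := [set x : 'I_k | 0 < F v x].
have e1 : d = \sum_(x in P) F v x.
  rewrite -(sumF v) [in RHS]big_mkcond /=; apply: eq_bigr => x _.
  by rewrite inE; case: posnP.
have e2 : odd d = odd #|P|.
  rewrite e1 -sum1_card; apply: odd_sum_eq => x; rewrite inE => /F_odd ->.
  done.
apply/negPn/negP => hna.
have haz : F v a = 0 by move: (hF a); rewrite (negbTE hna) orbF => /eqP.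
have sub : P \subset ~: [set c v; a].
  apply/subsetP => x; rewrite !inE; case: (x =P c v) => [->|_]; first by rewrite F_self.
  by case: (x =P a) => [->|_] //; rewrite haz.
have cP : #|P| <= 1.
  have := subset_leq_card sub.
  have := cardsC [set c v; a]; rewrite cards2 eq_sym hav card_ord => h1 h2.
  move: h1 h2 hk => /= h1 h2 hk; lia.
have P0 : #|P| = 0.
  move: cP e2 he; case: #|P| => // [[|//]] _ -> //.
have : d = 0.
  rewrite e1; move/eqP: P0; rewrite cards_eq0 => /eqP ->.
  by rewrite big_set0.
by move=> d0; move: hd; rewrite d0.
Qed.

Lemma no_small : 0 < d -> ~~ odd d -> 2 <= k -> k <= 3 -> False.
Proof.
move=> hd he hk2 hk3.
pose w : cube_vertex d := [ffun => false].
have [a ha] : exists a : 'I_k, a != c w.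
  case: (val (c w) =P 0) => h0.
    have h1 : 1 < k by [].
    by exists (Ordinal h1); apply/eqP => /(congr1 val) /=; rewrite h0.
  have h1 : 0 < k by apply: leq_trans hk2.
  by exists (Ordinal h1); apply/eqP => /(congr1 val) /= /esym.
have hS := @sym_even d (fun i j => (c (flip (flip w i) j) == a : nat)).
have {}hS : ~~ odd (\sum_(0 <= i < d) F (flip w i) a).
  apply: hS => [i j|i]; first by rewrite flipC.
  by rewrite flipK eq_sym (negbTE ha).
have e : odd (\sum_(0 <= i < d) F (flip w i) a) =
         odd (\sum_(0 <= i < d) (c (flip w i) != a : nat)).
  rewrite big_nat_cond [in RHS]big_nat_cond; apply: odd_sum_eq => i /andP [/andP [_ hi] _].
  case: (c (flip w i) =P a) => [<-|/eqP hne]; first by rewrite F_self.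
  by rewrite step1 // eq_sym.
have e2 : \sum_(0 <= i < d) (c (flip w i) != a : nat) + F w a = d.
  rewrite /F -big_split /= (eq_bigr (fun _ => 1)); first by rewrite sum_nat_const_nat muln1 subn0.
  by move=> i _; rewrite addn_negb.
have oF : odd (F w a) by apply: step1; rewrite // eq_sym.
move: hS; rewrite e; have := congr1 odd e2; rewrite oddD oF (negbTE he).
by case: (odd _).
Qed.

End Lower.


Theorem proposition13 (d : nat) :
  0 < d ->
  chi_so_eq (@cube_adj d) (if odd d then 2 else 4).
Proof.
move=> hd; case: ifP => ho; split.
- exact: odd_colorable.
- by move=> k hk; apply: small_k.
- by apply: even_colorable; rewrite ?ho.
- move=> k hk [c hc].
  case: (leqP k 1) => hk1; first by apply: (small_k hd hk1); exists c.
  by apply: (no_small hc hd); rewrite ?ho.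
Qed.
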